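(* Let $k\ge 0$ be an integer, put $K=k+6$ and $M=\dfrac{K}{\gcd(K,60)}$. For all integers $a_0,a_1,a_2$ with $a_0+a_1+a_2=k+3$ (equivalently, for every integral $G_2^{(1)}$-weight of level $k+2$, written in $A_2$ labels as explained in the context), $$D(a_1,a_2)\equiv D(a_0,a_1)\equiv D(a_2,a_0)\pmod M .$$ Equivalently, $\dim_{G_2}(b')\equiv\dim_{G_2}(Jb')\equiv\dim_{G_2}(J^2b')\pmod M$ for every integral level-$(k+2)$ $G_2^{(1)}$-weight $b'$.
   Context: For integers $a_1,a_2$ define $$D(a_1,a_2)=\frac{1}{120}(a_2-a_1)(a_2+1)(2a_2+a_1+3)(a_2+a_1+2)(a_2+2a_1+3)(a_1+1),$$ which is always an integer (it is the formal $G_2$ Weyl dimension). Integral $G_2^{(1)}$-weights of level $k+2$ are triples $(c_0;c_1,c_2)$ of integers (not necessarily nonnegative) with $c_0+2c_1+c_2=k+2$, with formal Weyl dimension $\dim_{G_2}(c_0;c_1,c_2)=\frac1{120}(c_1+1)(c_2+1)(c_1+c_2+2)(2c_1+c_2+3)(3c_1+c_2+4)(3c_1+2c_2+5)$. They correspond bijectively to integer triples $(a_0;a_1,a_2)$ with $a_0+a_1+a_2=k+3$ (''$A_2$ labels'') via $\iota'(c_0;c_1,c_2)=(c_0;c_1,c_1+c_2+1)$, and then $\dim_{G_2}(c)=D(a_1,a_2)$. The $A_2$ simple current $J$ acts on $A_2$ labels by $J(a_0;a_1,a_2)=(a_2;a_0,a_1)$; on $G_2$ labels this is $J(c_0;c_1,c_2)=(c_1+c_2+1;c_0,c_1-c_0-1)$.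 *)

(* Defs.v *)
From Stdlib Require Import ZArith.
Open Scope Z_scope.

(* Formal G2 Weyl dimension in A2 labels. The product is always divisible
   by 120, so Z.div is exact division here. *)
Definition D (a1 a2 : Z) : Z :=
  ((a2 - a1) * (a2 + 1) * (2*a2 + a1 + 3) * (a2 + a1 + 2)
     * (a2 + 2*a1 + 3) * (a1 + 1)) / 120.

(* Main.v *)
Require Import Defs.
From Stdlib Require Import ZArith Lia List Zdiv.
Open Scope Z_scope.

Definition Pp (x y : Z) : Z := (y - x) * y * (2*y + x) * (x + y) * (y + 2*x) * x.

Definition Qp (x y K : Z) : Z :=
  2*x*K*K*K*K - 10*x*y*K*K*K + 20*x*y*y*K*K - 20*x*y*y*y*K + 10*x*y*y*y*y
  - 5*x*x*K*K*K + 20*x*x*y*K*K - 30*x*x*y*y*K + 20*x*x*y*y*y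
  + 5*x*x*x*x*K - 10*x*x*x*x*y - 2*x*x*x*x*x.

Lemma PQ x y K : Pp x y - Pp (K - x - y) x = K * Qp x y K.
Proof. unfold Pp, Qp. ring. Qed.

Definition zrange (n : nat) := map Z.of_nat (seq 0 n).

Lemma zrange_spec n r : 0 <= r < Z.of_nat n -> In r (zrange n).
Proof.
  intros H. unfold zrange. apply in_map_iff. exists (Z.to_nat r).
  split; [lia|]. apply in_seq. lia.
Qed.

Lemma check1 n (f : Z -> bool) : forallb f (zrange n) = true ->
  forall r, 0 <= r < Z.of_nat n -> f r = true.
Proof.
  intros H r Hr. rewrite forallb_forall in H. apply H, zrange_spec, Hr.
Qed.

Lemma modb m a : 0 < m -> 0 <= a mod m < m.
Proof. intros; apply Z.mod_pos_bound; lia. Qed.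

From Stdlib Require Import Setoid Morphisms.
#[local] Existing Instance eqm_setoid.
#[local] Existing Instance Zplus_eqm.
#[local] Existing Instance Zminus_eqm.
#[local] Existing Instance Zmult_eqm.

Lemma Pp_cong m x y x' y' : eqm m x x' -> eqm m y y' -> eqm m (Pp x y) (Pp x' y').
Proof. intros Hx Hy. unfold Pp. rewrite Hx, Hy. reflexivity. Qed.

Lemma Pp_mod m x y : eqm m (Pp x y) (Pp (x mod m) (y mod m)).
Proof. apply Pp_cong; symmetry; apply Zmod_eqm. Qed.

Lemma Qp_cong m x y K x' y' K' : eqm m x x' -> eqm m y y' -> eqm m K K' ->
  eqm m (Qp x y K) (Qp x' y' K').
Proof. intros Hx Hy HK. unfold Qp. rewrite Hx, Hy, HK. reflexivity. Qed.

Lemma Qp_mod m x y K : eqm m (Qp x y K) (Qp (x mod m) (y mod m) (K mod m)).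
Proof. apply Qp_cong; symmetry; apply Zmod_eqm. Qed.

Lemma P_modp m x y : 0 < m ->
  forallb (fun a => forallb (fun b => Z.eqb (Pp a b mod m) 0) (zrange (Z.to_nat m)))
     (zrange (Z.to_nat m)) = true ->
  Pp x y mod m = 0.
Proof.
  intros Hm H.
  pose proof (Pp_mod m x y) as E. unfold eqm in E. rewrite E.
  apply Z.eqb_eq.
  refine (check1 _ (fun b => Z.eqb (Pp (x mod m) b mod m) 0) _ _ _).
  - refine (check1 _ (fun a => forallb (fun b => Z.eqb (Pp a b mod m) 0) (zrange (Z.to_nat m))) H _ _).
    pose proof (modb m x Hm); lia.
  - pose proof (modb m y Hm); lia.
Qed.

Lemma crt120 n : n mod 8 = 0 -> n mod 3 = 0 -> n mod 5 = 0 -> n mod 120 = 0.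
Proof.
  intros H8 H3 H5.
  apply Z.mod_divide in H8; [|lia]. apply Z.mod_divide in H3; [|lia].
  apply Z.mod_divide in H5; [|lia].
  destruct H8 as [p Hp], H3 as [q Hq], H5 as [r Hr].
  apply Z.mod_divide; [lia|]. exists (-p + q - r). lia.
Qed.

Lemma P120 x y : Pp x y mod 120 = 0.
Proof.
  apply crt120.
  - exact (P_modp 8 x y ltac:(lia) ltac:(vm_compute; reflexivity)).
  - exact (P_modp 3 x y ltac:(lia) ltac:(vm_compute; reflexivity)).
  - exact (P_modp 5 x y ltac:(lia) ltac:(vm_compute; reflexivity)).
Qed.

Lemma gcd_red K m d : 0 < d -> (K mod m) mod d = K mod d ->
  Z.gcd K d = Z.gcd (K mod m) d.
Proof.
  intros Hd H.
  rewrite (Z.gcd_comm (K mod m) d), <- (Z.gcd_mod (K mod m) d) by lia. rewrite H.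
  rewrite Z.gcd_mod by lia. apply Z.gcd_comm.
Qed.

Lemma Q_modp m d x y K : 0 < m -> 0 < d -> (K mod m) mod d = K mod d ->
  forallb (fun a => forallb (fun b => forallb (fun c =>
     Z.eqb ((Z.gcd c d * Qp a b c) mod m) 0) (zrange (Z.to_nat m)))
     (zrange (Z.to_nat m))) (zrange (Z.to_nat m)) = true ->
  (Z.gcd K d * Qp x y K) mod m = 0.
Proof.
  intros Hm Hd Hr H.
  rewrite (gcd_red K m d Hd Hr).
  assert (E : eqm m (Z.gcd (K mod m) d * Qp x y K)
                    (Z.gcd (K mod m) d * Qp (x mod m) (y mod m) (K mod m))).
  { apply Zmult_eqm; [reflexivity| apply Qp_mod]. }
  unfold eqm in E. rewrite E. apply Z.eqb_eq.
  pose proof (modb m x Hm). pose proof (modb m y Hm). pose proof (modb m K Hm).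
  refine (check1 (Z.to_nat m) (fun c => Z.eqb ((Z.gcd c d * Qp (x mod m) (y mod m) c) mod m) 0) _ _ _); [|lia].
  refine (check1 (Z.to_nat m) (fun b => forallb (fun c => Z.eqb ((Z.gcd c d * Qp (x mod m) b c) mod m) 0) (zrange (Z.to_nat m))) _ _ _); [|lia].
  refine (check1 (Z.to_nat m) (fun a => forallb (fun b => forallb (fun c =>
     Z.eqb ((Z.gcd c d * Qp a b c) mod m) 0) (zrange (Z.to_nat m)))
     (zrange (Z.to_nat m))) H _ _). lia.
Qed.

Lemma gQ120 x y K : (Z.gcd K 60 * Qp x y K) mod 120 = 0.
Proof.
  pose proof (Q_modp 8 4 x y K ltac:(lia) ltac:(lia) ltac:(apply Z.mod_mod_divide; exists 2; lia) ltac:(vm_compute; reflexivity)) as H8.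
  pose proof (Q_modp 3 3 x y K ltac:(lia) ltac:(lia) ltac:(apply Z.mod_mod; lia) ltac:(vm_compute; reflexivity)) as H3.
  pose proof (Q_modp 5 5 x y K ltac:(lia) ltac:(lia) ltac:(apply Z.mod_mod; lia) ltac:(vm_compute; reflexivity)) as H5.
  assert (Hd : forall d, 0 < d -> (d | 60) -> (Z.gcd K d | Z.gcd K 60)).
  { intros d Hd Hd60. apply Z.gcd_greatest.
    - apply Z.gcd_divide_l.
    - eapply Z.divide_trans; [apply Z.gcd_divide_r| exact Hd60]. }
  apply crt120.
  - apply Z.mod_divide in H8; [|lia]. apply Z.mod_divide; [lia|].
    destruct (Hd 4 ltac:(lia) ltac:(exists 15; lia)) as [c Hc]. rewrite Hc.
    rewrite <- Z.mul_assoc. apply Z.divide_mul_r. exact H8.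
  - apply Z.mod_divide in H3; [|lia]. apply Z.mod_divide; [lia|].
    destruct (Hd 3 ltac:(lia) ltac:(exists 20; lia)) as [c Hc]. rewrite Hc.
    rewrite <- Z.mul_assoc. apply Z.divide_mul_r. exact H3.
  - apply Z.mod_divide in H5; [|lia]. apply Z.mod_divide; [lia|].
    destruct (Hd 5 ltac:(lia) ltac:(exists 12; lia)) as [c Hc]. rewrite Hc.
    rewrite <- Z.mul_assoc. apply Z.divide_mul_r. exact H5.
Qed.

Lemma key x y K :
  (Pp x y / 120) mod (K / Z.gcd K 60) = (Pp (K - x - y) x / 120) mod (K / Z.gcd K 60).
Proof.
  set (g := Z.gcd K 60).
  assert (Hg : g <> 0).
  { intro E. apply Z.gcd_eq_0 in E. lia. }
  destruct (Z.gcd_divide_l K 60) as [c Hc]. fold g in Hc.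
  assert (HM : K / g = c) by (rewrite Hc; apply Z.div_mul; exact Hg).
  rewrite HM.
  pose proof (Z_div_exact_full_2 _ 120 ltac:(lia) (P120 x y)) as HA.
  pose proof (Z_div_exact_full_2 _ 120 ltac:(lia) (P120 (K - x - y) x)) as HB.
  set (A := Pp x y / 120) in *. set (B := Pp (K - x - y) x / 120) in *.
  pose proof (PQ x y K) as HQ.
  pose proof (Z_div_exact_full_2 _ 120 ltac:(lia) (gQ120 x y K)) as Ht.
  fold g in Ht. set (t := g * Qp x y K / 120) in *.
  assert (E : 120 * (A - B) = 120 * (t * c)).
  { rewrite Z.mul_sub_distr_l, <- HA, <- HB, HQ.
    transitivity (c * (g * Qp x y K)).
    - rewrite Hc at 1. ring.
    - rewrite Ht. ring. }
  apply Z.mul_reg_l in E; [|lia].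
  replace A with (B + t * c) by lia. apply Z_mod_plus_full.
Qed.

Theorem theorem2 (k : Z) (hk : 0 <= k) (a0 a1 a2 : Z)
  (hsum : a0 + a1 + a2 = k + 3) :
  let K := k + 6 in
  let M := K / Z.gcd K 60 in
  (D a1 a2 mod M = D a0 a1 mod M) /\ (D a0 a1 mod M = D a2 a0 mod M).
Proof.
  intros K M.
  assert (HD : forall u v, D u v = Pp (u + 1) (v + 1) / 120).
  { intros u v. unfold D, Pp. f_equal. ring. }
  rewrite !HD. unfold M. split.
  - pose proof (key (a1 + 1) (a2 + 1) K) as H.
    replace (K - (a1 + 1) - (a2 + 1)) with (a0 + 1) in H by (unfold K; lia).
    exact H.
  - pose proof (key (a0 + 1) (a1 + 1) K) as H.
    replace (K - (a0 + 1) - (a1 + 1)) with (a2 + 1) in H by (unfold K; lia).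
    exact H.
Qed.
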